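(* For every forest $T$ on $n \geq 1$ vertices, $pdim(T) \leq 1.441 \log_2 n + 3$.
   Context: For a graph $G=(V,E)$ and $l\in\mathbb{N}$, an $l$-encoding of $G$ is an injective function $\phi: V\to\mathbb{N}^l$ such that for all $u,v\in V$, $\{u,v\}\in E$ if and only if $\phi(u)$ and $\phi(v)$ differ in all $l$ coordinates. The product dimension $pdim(G)$ is the minimum $l$ such that an $l$-encoding of $G$ exists (equivalently, the minimum $l$ such that $G$ is an induced subgraph of a direct product of $l$ complete graphs). *)

(* Defs.v *)
From mathcomp Require Import all_boot.
From Stdlib Require Import Reals.
Set Implicit Arguments. Unset Strict Implicit. Unset Printing Implicit Defensive.

Definition simple_graph (T : finType) (e : rel T) : Prop :=
  symmetric e /\ irreflexive e.

Definition has_cycle (T : finType) (e : rel T) : Prop :=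
  exists (x : T) (s : seq T),
    [/\ 2 <= size s, uniq (x :: s), path e x s & e (last x s) x].

Definition forest (T : finType) (e : rel T) : Prop :=
  simple_graph e /\ ~ has_cycle e.

Definition encoding (T : finType) (e : rel T) (l : nat)
    (phi : T -> {ffun 'I_l -> nat}) : Prop :=
  injective phi /\
  forall u v : T, e u v <-> (forall i : 'I_l, phi u i <> phi v i).

Definition has_encoding (T : finType) (e : rel T) (l : nat) : Prop :=
  exists phi : T -> {ffun 'I_l -> nat}, @encoding T e l phi.

Definition log2 (x : R) : R := (ln x / ln 2)%R.

(* Main.v *)
Require Import Defs.
From mathcomp Require Import all_boot zify.
From Stdlib Require Import Reals Lra.
Set Implicit Arguments. Unset Strict Implicit. Unset Printing Implicit Defensive.

Section Main.
Variables (T : finType) (e : rel T).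
Hypothesis esym : symmetric e.
Hypothesis eirr : irreflexive e.

Definition Good (S : {set T}) (d : nat) : Prop :=
  exists (col : T -> bool) (cs : nat -> T -> nat),
  [/\ (forall u w, u \in S -> w \in S -> e u w -> col u != col w),
      (forall i u w, u \in S -> w \in S -> e u w -> cs i u != cs i w) &
      (forall u w, u \in S -> w \in S -> u != w -> ~~ e u w -> col u != col w ->
         exists2 i, i < d & cs i u = cs i w)].

Lemma Good_mono S d d' : d <= d' -> Good S d -> Good S d'.
Proof.
move=> hd [col [cs [h1 h2 h3]]]; exists col, cs; split=> // u w uS wS uw nuw cuw.
by have [i hi hc] := h3 u w uS wS uw nuw cuw; exists i => //; apply: leq_trans hd.
Qed.

Lemma glue S A B v d :
  A :|: B = S -> A :&: B \subset [set v] ->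
  (forall x y, x \in A -> x \notin B -> y \in B -> y \notin A -> ~~ e x y) ->
  Good A d -> Good B d -> Good S d.+1.
Proof.
move=> hU hI hX [colA [csA [a1 a2 a3]]] [colB [csB [b1 b2 b3]]].
have AB u : u \in A -> u \in B -> u = v.
  by move=> uA uB; apply/set1P; apply: (subsetP hI); rewrite inE uA uB.
pose flip := (v \in A) && (colA v != colB v).
pose col u := if u \in A then colA u else colB u (+) flip.
have F1 u : u \in B -> col u = colB u (+) flip.
  move=> uB; rewrite /col /flip; case: ifP => // uA.
  have e1 := AB u uA uB; subst u.
  by rewrite uA /=; case: (colA v); case: (colB v).
have F1A u : u \in A -> col u = colA u by rewrite /col => ->.
pose g i k := if k == csB i v then (csA i v).*2 else k.*2.+1.
have par a b : (a.*2 == b.*2.+1) = false.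
  by apply/eqP; move/(congr1 odd); rewrite /= !odd_double.
have db k k' : (k.*2 == k'.*2) = (k == k').
  by rewrite -!muln2 eqn_mul2r.
have ginj i k k' : (g i k == g i k') = (k == k').
  rewrite /g; have [e1|hk] := eqVneq k (csB i v); have [e2|hk'] := eqVneq k' (csB i v);
    rewrite ?e1 ?e2.
  - by rewrite !eqxx.
  - by rewrite par eq_sym (negPf hk').
  - by rewrite eq_sym par (negPf hk).
  - by apply/eqP/eqP => [[]/eqP|->] //; rewrite db => /eqP.
pose sep u := if u \in A then (if u \in B then 2 else nat_of_bool (col u))
              else nat_of_bool (~~ col u).
pose c i u := if i == d then sep u else
              if u \in A then (csA i u).*2 else g i (csB i u).
have F2 i u : i != d -> u \in B -> c i u = g i (csB i u).
  move=> /negPf hi uB; rewrite /c hi; case: ifP => // uA.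
  by rewrite (AB u uA uB) /g eqxx.
have F3 i u : i != d -> u \in A -> c i u = (csA i u).*2.
  by move=> /negPf hi uA; rewrite /c hi uA.
have xorne (a b f : bool) : (a (+) f != b (+) f) = (a != b) by case: a; case: b; case: f.
have inS u : u \in S -> (u \in A) || (u \in B) by rewrite -hU inE.
have cases u w : u \in S -> w \in S ->
   [\/ u \in A /\ w \in A, u \in B /\ w \in B,
       [/\ u \in A, u \notin B, w \in B & w \notin A] |
       [/\ w \in A, w \notin B, u \in B & u \notin A]].
  move=> /inS uS /inS wS.
  case uA: (u \in A); case wA: (w \in A); first by constructor 1.
  - case uB: (u \in B); first by rewrite wA /= in wS; constructor 2.
    by rewrite wA /= in wS; constructor 3.
  - case wB: (w \in B); first by rewrite uA /= in uS; constructor 2.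
    by rewrite uA /= in uS; constructor 4.
  - by rewrite uA wA /= in uS wS; constructor 2.
have noedge u w : u \in S -> w \in S -> e u w -> (u \in A /\ w \in A) \/ (u \in B /\ w \in B).
  move=> uS wS euw; case: (cases u w uS wS) => [h|h|[x1 x2 x3 x4]|[x1 x2 x3 x4]]; [by left|by right| |].
  - by move: (hX u w x1 x2 x3 x4); rewrite euw.
  - by move: (hX w u x1 x2 x3 x4); rewrite esym euw.
exists col, c; split.
- move=> u w uS wS euw; case: (noedge u w uS wS euw) => [[uA wA]|[uB wB]].
    by rewrite !F1A //; apply: a1.
  by rewrite !F1 // xorne; apply: b1.
- move=> i u w uS wS euw; case: (eqVneq i d) => [->|hi].
    rewrite /c eqxx /sep.
    have cuw : col u != col w.
      case: (noedge u w uS wS euw) => [[uA wA]|[uB wB]].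
        by rewrite !F1A //; apply: a1.
      by rewrite !F1 // xorne; apply: b1.
    case: (noedge u w uS wS euw) => [[uA wA]|[uB wB]].
      rewrite uA wA; case uB: (u \in B); case wB: (w \in B) => //.
      + by rewrite (AB u uA uB) (AB w wA wB) eirr in euw.
      + by case: (col w).
      + by case: (col u).
      + by case: (col u) (col w) cuw => [] [].
    rewrite uB wB; case uA: (u \in A); case wA: (w \in A) => //.
    + by rewrite (AB u uA uB) (AB w wA wB) eirr in euw.
    + by case: (col w).
    + by case: (col u).
    + by case: (col u) (col w) cuw => [] [].
  case: (noedge u w uS wS euw) => [[uA wA]|[uB wB]].
    by rewrite !F3 // db; apply: a2.
  by rewrite !F2 // ginj; apply: b2.
- move=> u w uS wS uw nuw cuw.
  case: (cases u w uS wS) => [[uA wA]|[uB wB]|[uA uB wB wA]|[wA wB uB uA]].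
  + rewrite !F1A // in cuw; have [i hi hc] := a3 u w uA wA uw nuw cuw.
    have hid : i != d by rewrite neq_ltn hi.
    by exists i; [apply: ltnW|rewrite !F3 // hc].
  + rewrite !F1 // in cuw.
    have cuw' : colB u != colB w by rewrite xorne in cuw.
    have [i hi hc] := b3 u w uB wB uw nuw cuw'.
    have hid : i != d by rewrite neq_ltn hi.
    by exists i; [apply: ltnW|rewrite !F2 // hc].
  + exists d => //; rewrite /c eqxx /sep uA (negPf uB) (negPf wA).
    by case: (col u) (col w) cuw => [] [].
  + exists d => //; rewrite /c eqxx /sep wA (negPf wB) (negPf uA).
    by case: (col u) (col w) cuw => [] [].
Qed.


Lemma card2_eq (S : {set T}) u w : #|S| <= 2 -> u \in S -> w \in S -> u != w ->
  forall z, z \in S -> (z == u) || (z == w).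
Proof.
move=> hS uS wS uw z zS.
have sub : [set u; w] \subset S by apply/subsetP => x; rewrite !inE => /orP[] /eqP ->.
have : [set u; w] == S by rewrite eqEcard sub cards2 uw.
by move/eqP => eS; rewrite -eS !inE in zS.
Qed.

Lemma Good0 (S : {set T}) : #|S| <= 2 -> Good S 0.
Proof.
move=> hS.
pose col u := [exists y in S, e u y] && (Some u == [pick x in S]).
exists col, (fun _ u => val (enum_rank u)); split.
- move=> u w uS wS euw.
  have uw : u != w by apply/eqP => h; rewrite h eirr in euw.
  have hu : [exists y in S, e u y] by apply/existsP; exists w; rewrite wS.
  have hw : [exists y in S, e w y] by apply/existsP; exists u; rewrite uS esym.
  rewrite /col hu hw /=.
  case: pickP => [x xS|]; last by move/(_ u); rewrite uS.
  have := card2_eq hS uS wS uw xS.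
  have so (a b : T) : (Some a == Some b) = (a == b) by apply/eqP/eqP => [[]|->].
  case/orP=> /eqP ->; rewrite !so eqxx.
  + by rewrite [w == u]eq_sym (negPf uw).
  + by rewrite (negPf uw).
- move=> i u w uS wS euw; apply/negP => /eqP /val_inj /enum_rank_inj h.
  by rewrite h eirr in euw.
- move=> u w uS wS uw nuw.
  have nob z : z \in S -> ~~ [exists y in S, e z y].
    move=> zS; apply/existsP => [[y /andP[yS ezy]]].
    have hz := card2_eq hS uS wS uw zS; have hy := card2_eq hS uS wS uw yS.
    case/orP: hz => /eqP ez; case/orP: hy => /eqP ey; subst z y; move: ezy;
      by rewrite ?eirr ?(esym w) ?(negPf nuw).
  by rewrite /col (negPf (nob u uS)) (negPf (nob w wS)).
Qed.


Definition er (U : {set T}) : rel T := fun x y => [&& e x y, x \in U & y \in U].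
Lemma er_sym U : symmetric (er U).
Proof. by move=> x y; rewrite /er esym; case: (x \in U); case: (y \in U). Qed.
Definition comp (U : {set T}) x := [set y in U | connect (er U) x y].
Definition closedin (U G : {set T}) :=
  G \subset U /\ (forall a b, a \in G -> b \in U -> e a b -> b \in G).

Lemma comp_closed (U : {set T}) x : closedin U (comp U x).
Proof.
split; first by apply/subsetP => y; rewrite inE => /andP[].
move=> a b; rewrite !inE => /andP[aU xa] bU eab; rewrite bU /=.
by apply: connect_trans xa (connect1 _); rewrite /er eab aU bU.
Qed.

Lemma comp_self (U : {set T}) x : x \in U -> x \in comp U x.
Proof. by move=> xU; rewrite inE xU connect0. Qed.

Lemma closed_comp (U G : {set T}) x : closedin U G -> x \in G -> comp U x \subset G.
Proof.
move=> [GU clG] xG; apply/subsetP => y; rewrite inE => /andP[yU cxy].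
have cl : closed (er U) G.
  move=> a b /and3P[eab aU bU]; apply/idP/idP => [aG|bG]; first exact: clG eab.
  by apply: clG bG aU _; rewrite esym.
by rewrite -(closed_connect cl cxy).
Qed.

Lemma closed_compl (U G : {set T}) : closedin U G -> closedin U (U :\: G).
Proof.
move=> [GU clG]; split; first by apply/subsetP => y; rewrite inE => /andP[].
move=> a b; rewrite !inE => /andP[naG aU] bU eab; rewrite bU andbT.
by apply/negP => bG; move: naG; rewrite (clG b a bG aU) // esym.
Qed.

Lemma closed_U (U G1 G2 : {set T}) : closedin U G1 -> closedin U G2 -> closedin U (G1 :|: G2).
Proof.
move=> [s1 c1] [s2 c2]; split; first by rewrite subUset s1 s2.
move=> a b; rewrite !inE => /orP[aG|aG] bU eab; first by rewrite (c1 a b).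
by rewrite (c2 a b) ?orbT.
Qed.

Lemma closed_sub (U U' G : {set T}) : closedin U G -> G \subset U' -> U' \subset U -> closedin U' G.
Proof.
move=> [s c] s1 s2; split => // a b aG bU' eab; apply: c aG _ eab.
exact: subsetP s2 b bU'.
Qed.

Lemma path_er (U : {set T}) x p : path (er U) x p -> path e x p && all (fun y => y \in U) p.
Proof.
elim: p x => //= y p IH x /andP[]; rewrite {1}/er => /and3P[exy _ yU] /IH /andP[h1 h2].
by rewrite exy yU h1 h2.
Qed.

Hypothesis noc : ~ has_cycle e.

Lemma two_nbrs (S : {set T}) v y p w : p \in comp (S :\ v) y -> w \in comp (S :\ v) y ->
  p != w -> e v p -> e v w -> False.
Proof.
rewrite /comp !inE => /andP[/andP[pv pS] cyp] /andP[/andP[wv wS] cyw] pw evp evw.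
have cw : connect (er (S :\ v)) w p.
  apply: connect_trans _ cyp.
  by rewrite (sym_connect_sym (er_sym _)).
case/connectP: cw => q pq lq.
move: lq; case: (shortenP pq) => q' pq' uq' _ lq.
apply: noc; exists v, (w :: q'); split.
- case: q' {pq' uq'} lq => [|z q'] /= lq //.
  by rewrite lq eqxx in pw.
- have /andP[pe al] := path_er pq'.
  rewrite cons_uniq uq' andbT inE negb_or eq_sym wv /=.
  apply/negP => vq; have := allP al v vq; rewrite !inE eqxx //.
- by have /andP[pe al] := path_er pq'; rewrite /= evw pe.
- by rewrite /= -lq esym.
Qed.


Definition mx (S : {set T}) v := \max_(y in S :\ v) #|comp (S :\ v) y|.

Lemma centroid (S : {set T}) x0 : x0 \in S ->
  exists2 v, v \in S & forall y, y \in S :\ v -> (#|comp (S :\ v) y|).*2 <= #|S|.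
Proof.
move=> x0S.
case: (arg_minnP (mx S) x0S) => v vS vmin.
exists v => // y yS'; rewrite leqNgt; apply/negP => big.
set C := comp (S :\ v) y.
have CS : C \subset S :\ v by case: (comp_closed (S :\ v) y).
have yC : y \in C by apply: comp_self.
pose w := if [pick p in C | e v p] is Some p then p else y.
have wC : w \in C by rewrite /w; case: pickP => [p /andP[]|] //.
have H p : p \in C -> p != w -> ~~ e v p.
  move=> pC pw; apply/negP => evp; move: pw; rewrite /w.
  case: pickP => [p' /andP[p'C evp'] pp'|/(_ p)]; last by rewrite pC evp.
  exact: two_nbrs pC p'C pp' evp evp'.
have wS' : w \in S :\ v by apply: subsetP CS w wC.
have wS : w \in S by move: wS'; rewrite inE => /andP[].
set D := C :\ w.
have Dcl : closedin (S :\ w) D.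
  split.
    apply/subsetP => z; rewrite /D !in_setD1 => /andP[zw zC].
    by have := subsetP CS z zC; rewrite in_setD1 zw => /andP[_ ->].
  move=> a b; rewrite /D !in_setD1 => /andP[aw aC] /andP[bw bS] eab; rewrite bw /=.
  case: (eqVneq b v) => [ebv|bv].
    by rewrite ebv esym in eab; move: (H a aC aw); rewrite eab.
  have [_ c] := comp_closed (S :\ v) y.
  by apply: c aC _ eab; rewrite in_setD1 bv bS.
have cardD : #|D|.+1 = #|C| by rewrite [#|C|](cardsD1 w) wC.
have cardSC : #|S :\: C| = #|S| - #|C|.
  have CS2 : C \subset S by apply: subset_trans CS (subsetDl _ _).
  by rewrite cardsD (setIidPr CS2).
have hw z : z \in S :\ w -> #|comp (S :\ w) z| < #|C|.
  move=> zS; case: (boolP (z \in D)) => zD.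
    by rewrite -cardD ltnS; apply: subset_leq_card; apply: closed_comp Dcl zD.

  have sub : comp (S :\ w) z \subset S :\: C.
    apply: subset_trans (closed_comp (closed_compl Dcl) _) _; first by rewrite in_setD zD zS.
    apply/subsetP => t; rewrite in_setD in_setD1 => /andP[/negP tD /andP[tw tS]].
    rewrite in_setD tS andbT.
    by apply/negP => tC; apply: tD; rewrite /D in_setD1 tw tC.
  apply: leq_ltn_trans (subset_leq_card sub) _.
  by rewrite cardSC; rewrite -/C -addnn in big; lia.
have h1 : mx S w <= #|C|.-1.
  by apply/bigmax_leqP => z zS; have := hw z zS; lia.
have h2 : #|C| <= mx S v by apply: (leq_bigmax_cond (P := fun z => z \in S :\ v)).
have := vmin w wS; have : 0 < #|C| by apply/card_gt0P; exists y.
lia.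
Qed.


Lemma cardsU0 (A B : {set T}) : A :&: B = set0 -> #|A :|: B| = #|A| + #|B|.
Proof. by move=> h; rewrite cardsU h cards0 subn0. Qed.

Lemma disjD (A B C U : {set T}) : A \subset C -> B \subset U :\: C -> A :&: B = set0.
Proof.
move=> hA hB; apply/setP => z; rewrite inE in_set0; apply/negP => /andP[zA zB].
by have := subsetP hB z zB; rewrite in_setD (subsetP hA z zA).
Qed.

Lemma closed0 U : closedin U set0.
Proof. by split; [apply: sub0set | move=> a b; rewrite in_set0]. Qed.

Lemma setIU0l (A B C : {set T}) : A :&: C = set0 -> B :&: C = set0 -> (A :|: B) :&: C = set0.
Proof. by rewrite setIUl => -> ->; rewrite setU0. Qed.
Lemma setIU0r (A B C : {set T}) : A :&: B = set0 -> A :&: C = set0 -> A :&: (B :|: C) = set0.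
Proof. by rewrite setIUr => -> ->; rewrite setU0. Qed.

Ltac subU := let z := fresh "z" in let h := fresh "h" in
  apply/subsetP => z; rewrite !in_setU => h;
  repeat (case/orP: h => h); by rewrite h /= ?orbT.

Lemma firstfit (U : {set T}) (A B : nat) :
  (forall y, y \in U -> #|comp U y| <= B) -> #|U| <= A + B + 1 ->
  exists G1 G2 G3 : {set T}, [/\ closedin U G1, closedin U G2, closedin U G3,
     [/\ #|G1| <= A, #|G2| <= B & #|G3| <= B] &
     [/\ G1 :&: G2 = set0, G1 :&: G3 = set0, G2 :&: G3 = set0 & G1 :|: G2 :|: G3 = U]].
Proof.
move=> hB hU.
pose Inv G1 G2 G3 := [/\ [/\ closedin U G1, closedin U G2 & closedin U G3],
   [/\ #|G1| <= A, #|G2| <= B & #|G3| <= B],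
   [/\ G1 :&: G2 = set0, G1 :&: G3 = set0 & G2 :&: G3 = set0] &
   ((#|G2| == 0) || (A < #|G1| + #|G2|)) /\ ((#|G3| == 0) || (A < #|G1| + #|G3|))].
have fin G1 G2 G3 : Inv G1 G2 G3 -> U :\: (G1 :|: G2 :|: G3) = set0 ->
  exists G1 G2 G3 : {set T}, [/\ closedin U G1, closedin U G2, closedin U G3,
     [/\ #|G1| <= A, #|G2| <= B & #|G3| <= B] &
     [/\ G1 :&: G2 = set0, G1 :&: G3 = set0, G2 :&: G3 = set0 & G1 :|: G2 :|: G3 = U]].
  move=> [[c1 c2 c3] s [d12 d13 d23] _] hE; exists G1, G2, G3; split=> //.
  split=> //; apply/eqP; rewrite eqEsubset; apply/andP; split.
    by case: c1 => q1 _; case: c2 => q2 _; case: c3 => q3 _; rewrite !subUset q1 q2 q3.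
  by rewrite -setD_eq0 hE.
suff: forall k G1 G2 G3, Inv G1 G2 G3 -> #|U :\: (G1 :|: G2 :|: G3)| <= k ->
  exists G1 G2 G3 : {set T}, [/\ closedin U G1, closedin U G2, closedin U G3,
     [/\ #|G1| <= A, #|G2| <= B & #|G3| <= B] &
     [/\ G1 :&: G2 = set0, G1 :&: G3 = set0, G2 :&: G3 = set0 & G1 :|: G2 :|: G3 = U]].
  move/(_ #|U| set0 set0 set0); apply.
    by split; rewrite ?cards0 ?setI0 //; split; apply: closed0.
  by apply: subset_leq_card; apply: subsetDl.
elim=> [|k IHk] G1 G2 G3 hI hk.
  by apply: fin hI _; apply/eqP; rewrite -cards_eq0 -leqn0.
case: (set_0Vmem (U :\: (G1 :|: G2 :|: G3))) => [hE|[y yP]]; first by apply: fin hI hE.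
case: hI => [[c1 c2 c3] [s1 s2 s3] [d12 d13 d23] [i2 i3]].
set P := U :\: (G1 :|: G2 :|: G3) in yP hk.
have Pcl : closedin U P by apply: closed_compl; do 2 apply: closed_U => //.
set X := comp U y.
have XP : X \subset P by apply: closed_comp Pcl yP.
have Xcl : closedin U X by apply: comp_closed.
have yU : y \in U by move: yP; rewrite in_setD => /andP[].
have yX : y \in X by apply: comp_self.
have X1 : 0 < #|X| by apply/card_gt0P; exists y.
have XB : #|X| <= B by apply: hB.
have sU1 : G1 \subset G1 :|: G2 :|: G3 by subU.
have sU2 : G2 \subset G1 :|: G2 :|: G3 by subU.
have sU3 : G3 \subset G1 :|: G2 :|: G3 by subU.
have x1 : G1 :&: X = set0 by apply: disjD sU1 XP.
have x2 : G2 :&: X = set0 by apply: disjD sU2 XP.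
have x3 : G3 :&: X = set0 by apply: disjD sU3 XP.
have prog (NU : {set T}) : G1 :|: G2 :|: G3 \subset NU -> X \subset NU -> #|U :\: NU| <= k.
  move=> h1 h2.
  have sub : U :\: NU \subset P :\: X.
    apply/subsetP => z; rewrite !in_setD => /andP[zN zU].
    rewrite zU andbT; apply/andP; split.
      by apply/negP => zX; move/negP: zN; apply; apply: subsetP h2 z zX.
    by apply/negP => zG; move/negP: zN; apply; apply: subsetP h1 z zG.
  apply: leq_trans (subset_leq_card sub) _.
  by rewrite cardsD (setIidPr XP); move: hk; rewrite -/P; lia.
case h1: (#|G1| + #|X| <= A).
  apply: (IHk (G1 :|: X) G2 G3); last first.
    by apply: prog; subU.
  have cX : #|G1 :|: X| = #|G1| + #|X| by apply: cardsU0.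
  split.
  - by split => //; apply: closed_U.
  - by rewrite cX.
  - by split => //; apply: setIU0l => //; rewrite setIC.
  - by rewrite cX; split; [move: i2 | move: i3]; case: (#|_| == 0) => //=; lia.
case h2: (#|G2| + #|X| <= B).
  apply: (IHk G1 (G2 :|: X) G3); last first.
    by apply: prog; subU.
  have cX : #|G2 :|: X| = #|G2| + #|X| by apply: cardsU0.
  split.
  - by split => //; apply: closed_U.
  - by rewrite cX.
  - by split => //; [apply: setIU0r | apply: setIU0l => //; rewrite setIC].
  - rewrite cX; split; last by [].
    by apply/orP; right; move: h1; lia.
case h3: (#|G3| + #|X| <= B).
  apply: (IHk G1 G2 (G3 :|: X)); last first.
    by apply: prog; subU.
  have cX : #|G3 :|: X| = #|G3| + #|X| by apply: cardsU0.
  split.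
  - by split => //; apply: closed_U.
  - by rewrite cX.
  - by split => //; apply: setIU0r.
  - rewrite cX; split; first by [].
    by apply/orP; right; move: h1; lia.
exfalso.
have cU : #|G1 :|: G2 :|: G3 :|: X| = #|G1| + #|G2| + #|G3| + #|X|.
  rewrite cardsU0; last by do 2 apply: setIU0l => //.
  rewrite cardsU0; last by apply: setIU0l.
  by rewrite cardsU0.
have sUU : G1 :|: G2 :|: G3 :|: X \subset U.
  case: c1 => q1 _; case: c2 => q2 _; case: c3 => q3 _; case: Xcl => q4 _.
  by rewrite !subUset q1 q2 q3 q4.
have := subset_leq_card sUU; rewrite cU.
move: i2 h1 h2 h3 hU XB; case: (#|G2| == 0) => /=; lia.
Qed.


Lemma glue_closed (S G : {set T}) v d : v \in S -> closedin (S :\ v) G ->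
  Good (v |: G) d -> Good (S :\: G) d -> Good S d.+1.
Proof.
move=> vS [GS cG] gA gB.
have vG : v \notin G by apply/negP => /(subsetP GS); rewrite in_setD1 eqxx.
have GS' z : z \in G -> z \in S by move=> /(subsetP GS); rewrite in_setD1 => /andP[].
apply: (glue (A := v |: G) (B := S :\: G) (v := v)) gA gB.
- apply/setP => z; rewrite in_setU in_setU1 in_setD.
  case: (eqVneq z v) => [->|zv] /=; first by rewrite vS.
  by case zG: (z \in G) => //=; rewrite (GS' z zG).
- apply/subsetP => z; rewrite in_setI in_setU1 in_setD => /andP[/orP[/eqP ->|zG] /andP[nzG _]].
    by rewrite in_set1.
  by rewrite zG in nzG.
- move=> x y; rewrite in_setU1 in_setD in_setU1 in_setD => xA xB /andP[nyG yS] yA.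
  have xG : x \in G.
    case/orP: xA => [/eqP xv|] //; by move: xB; rewrite xv vS vG.
  rewrite negb_or in yA; case/andP: yA => yv _.
  by apply/negP => exy; move: nyG; rewrite (cG x y xG) // in_setD1 yv yS.
Qed.

Fixpoint Nf k := match k with 0 => 1 | 1 => 2 | (j.+1 as k1).+1 => Nf k1 + Nf j end.

Lemma Nf_gt0 k : 0 < Nf k.
Proof. elim/ltn_ind: k => k IH; case: k IH => [|[|k]] IH //=; by rewrite addn_gt0 (IH k.+1). Qed.

Lemma Nf_lt k : Nf k < Nf k.+1.
Proof. by case: k => [|k] //=; rewrite -addn1 leq_add2l Nf_gt0. Qed.

Lemma card_setU1 (G : {set T}) v : v \notin G -> #|v |: G| = #|G| + 1.
Proof. by move=> vG; rewrite cardsU1 vG addnC. Qed.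

Lemma main d : forall S : {set T}, #|S| <= Nf d.+1 -> Good S d.
Proof.
elim/ltn_ind: d => d IH S hS.
case: d IH hS => [|d] IH hS; first by apply: Good0.
case: (leqP #|S| (Nf d.+1)) => hn.
  by apply: (Good_mono (leqnSn d)); apply: IH.
have hS2 : #|S| <= Nf d.+1 + Nf d by [].
have ab : Nf d < Nf d.+1 := Nf_lt d.
have [x0 x0S] : exists x0, x0 \in S.
  by apply/set0Pn; rewrite -card_gt0; apply: leq_ltn_trans hn.
have [v vS hv] := centroid x0S.
have cardSv : #|S :\ v| = #|S| - 1 by rewrite [in RHS](cardsD1 v S) vS; lia.
have vnot (G : {set T}) : closedin (S :\ v) G -> v \notin G.
  by case=> GS _; apply/negP => /(subsetP GS); rewrite in_setD1 eqxx.
have cardSG (G : {set T}) : closedin (S :\ v) G -> #|S :\: G| = #|S| - #|G|.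
  case=> GS _; rewrite cardsD (setIidPr _) //.
  by apply: subset_trans GS (subsetDl _ _).
case: (boolP [exists y in S :\ v, Nf d <= #|comp (S :\ v) y|]).
  case/existsP => y /andP[yS' big].
  have Gcl := comp_closed (S :\ v) y.
  apply: (glue_closed vS Gcl).
    apply: IH => //; rewrite card_setU1; last exact: (vnot _ Gcl).
    by have := hv y yS'; lia.
  apply: IH => //; rewrite cardSG //; lia.
rewrite negb_exists => /forallP small.
have hsmall y : y \in S :\ v -> #|comp (S :\ v) y| <= Nf d - 1.
  by move=> yS; have := small y; rewrite yS /= -ltnNge; lia.
have [G1 [G2 [G3 [c1 c2 c3 [s1 s2 s3] [d12 d13 d23 un]]]]] :=
  firstfit (A := Nf d.+1 - 1) hsmall (ltac:(rewrite cardSv; lia)).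
apply: (glue_closed vS c1).
  by apply: IH => //; rewrite card_setU1; [lia | exact: (vnot _ c1)].
have [y yS'] : exists y, y \in S :\ v.
  by apply/set0Pn; rewrite -card_gt0 cardSv; have := Nf_gt0 d; lia.
have b2 : 2 <= Nf d.
  have := hsmall y yS'; have : 0 < #|comp (S :\ v) y|.
    by apply/card_gt0P; exists y; apply: comp_self.
  lia.
case: (posnP d) => [d0|dpos]; first by rewrite d0 in b2.
have ed : d.-1.+1 = d := prednK dpos.
have vS1 : v \in S :\: G1 by rewrite in_setD vS (vnot _ c1).
have c2' : closedin ((S :\: G1) :\ v) G2.
  apply: (closed_sub c2).
    apply/subsetP => z zG2; rewrite !in_setD1 in_setD.
    have := subsetP (proj1 c2) z zG2; rewrite in_setD1 => /andP[-> ->]; rewrite andbT /=.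
    by apply/negP => zG1; move: (d12) => /setP /(_ z); rewrite in_setI zG1 zG2 in_set0.
  by apply/subsetP => z; rewrite !in_setD1 in_setD => /and3P[-> _ ->].
rewrite -ed; apply: (glue_closed vS1 c2').
  by apply: (IH d.-1); [lia | rewrite ed card_setU1; [lia | exact: (vnot _ c2)]].
apply: (IH d.-1); first lia.
rewrite ed.
have eq3 : (S :\: G1) :\: G2 = v |: G3.
  apply/setP => z; rewrite !in_setD in_setU1.
  case: (eqVneq z v) => [->|zv] /=.
    by rewrite vS (negPf (vnot _ c1)) (negPf (vnot _ c2)).
  move: (un) => /setP /(_ z); rewrite !in_setU in_setD1 zv /=.
  case zS: (z \in S) => /=; last first.
    by move=> h; rewrite !andbF; move: h; case: (z \in G3); rewrite ?orbT.
  move=> h; case zG3: (z \in G3).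
    have n1 : z \notin G1 by apply/negP => zG1; move: (d13) => /setP /(_ z); rewrite in_setI zG1 zG3 in_set0.
    have n2 : z \notin G2 by apply/negP => zG2; move: (d23) => /setP /(_ z); rewrite in_setI zG2 zG3 in_set0.
    by rewrite n1 n2.
  by move: h; rewrite zG3 orbF; case: (z \in G1); case: (z \in G2).
rewrite eq3 card_setU1; [lia | exact: (vnot _ c3)].
Qed.

End Main.

Lemma Nf_gek k : k < Nf k.
Proof. elim: k => [|k IH] //; apply: leq_ltn_trans IH (Nf_lt k). Qed.

Open Scope R_scope.

Lemma lnle x y : 0 < x -> x <= y -> ln x <= ln y.
Proof.
move=> hx hxy; case: (Rle_lt_or_eq_dec _ _ hxy) => h.
  by apply: Rlt_le; apply: ln_increasing.
by rewrite h; apply: Rle_refl.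
Qed.

Lemma q_bound : 59 * ln 2 <= 85 * ln (1618/1000).
Proof.
have H : (2 ^ Z.of_nat 59 * 1000 ^ Z.of_nat 85 <= 1618 ^ Z.of_nat 85)%Z.
  by vm_compute; discriminate.
have {}H := IZR_le _ _ H; rewrite mult_IZR -!pow_IZR in H.
have E : (1618/1000) ^ 85 * 1000 ^ 85 = 1618 ^ 85.
  by rewrite -Rpow_mult_distr; f_equal; field.
have H2 : 2 ^ 59 <= (1618/1000) ^ 85.
  apply: (Rmult_le_reg_r (1000 ^ 85)); first by apply: pow_lt; lra.
  by rewrite E.
have := lnle (pow_lt 2 59 ltac:(lra)) H2.
rewrite !ln_pow; try lra.
by rewrite !INR_IZR_INZ /=.
Qed.

Lemma Nf_ge k : (1618/1000) ^ k <= INR (Nf k).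
Proof.
elim/ltn_ind: k => k IH; case: k IH => [|[|k]] IH /=; try lra.
have -> : INR (Nf k.+1 + Nf k) = INR (Nf k.+1) + INR (Nf k) by rewrite -plus_INR.
have h1 : (1618/1000) * (1618/1000) ^ k <= INR (Nf k.+1) by exact: (IH k.+1 (ltnSn _)).
have h0 := IH k (ltnW (ltnSn _)).
have hq : 0 <= (1618/1000) ^ k by apply: pow_le; lra.
have : (1618/1000) * ((1618/1000) * (1618/1000) ^ k) <= (1618/1000) * (1618/1000) ^ k + (1618/1000) ^ k by nra.
lra.
Qed.

Close Scope R_scope.

(* pdim(T) <= 1.441 log2 n + 3, i.e. there is an l-encoding with
   l <= 1.441 log2 n + 3 (pdim is the least such l). *)
Theorem theorem1 (T : finType) (e : rel T) :
  forest e -> 1 <= #|T| ->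
  exists l : nat, has_encoding e l /\
    (INR l <= 1441 / 1000 * log2 (INR #|T|) + 3)%R.
Proof.
move=> [[esym eirr] noc] hT.
have exP : exists d, #|T| <= Nf d.+1.
  by exists #|T|; apply: ltnW; apply: ltn_trans (Nf_gek _) (Nf_lt _).
case: (ex_minnP exP) => d hd dmin.
have [col [cs [h1 h2 h3]]] := main esym eirr noc (S := [set: T]) (d := d) ltac:(by rewrite cardsT).
exists d.+2; split.
  exists (fun u => [ffun i : 'I_d.+2 => if (i : nat) < d then cs i u
                   else if (i : nat) == d then nat_of_bool (col u) else val (enum_rank u)]).
  split.
    move=> u w /ffunP /(_ ord_max); rewrite !ffunE /= ltnNge leqnSn /=.
    rewrite (gtn_eqF (ltnSn d)).
    by move/val_inj/enum_rank_inj.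
  move=> u w; split.
    move=> euw i; rewrite !ffunE.
    case: ifP => _; first by apply/eqP; apply: h2; rewrite ?in_setT.
    case: ifP => _.
      by move: (h1 u w (in_setT u) (in_setT w) euw); case: (col u); case: (col w).
    have uw : u != w by apply/eqP => h; rewrite h eirr in euw.
    by move=> /val_inj /enum_rank_inj /eqP; rewrite (negPf uw).
  move=> hall; apply/negPn/negP => neuw.
  case: (eqVneq u w) => [uw|uw].
    by apply: (hall ord0); rewrite uw.
  case: (eqVneq (col u) (col w)) => [cuw|cuw].
    apply: (hall (Ordinal (leqW (ltnSn d) : d < d.+2)%N)).
    by rewrite !ffunE /= ltnn eqxx cuw.
  have [i hi hc] := h3 u w (in_setT u) (in_setT w) uw neuw cuw.
  apply: (hall (Ordinal (ltn_trans hi (ltnW (ltnSn d.+1)) : i < d.+2)%N)).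
  by rewrite !ffunE /= hi hc.
have ln2 : (0 < ln 2)%R by have := ln_lt_2; lra.
have n1 : (1 <= INR #|T|)%R by apply: (le_INR 1); apply/leP.
have lnn : (0 <= ln (INR #|T|))%R by rewrite -ln_1; apply: lnle; lra.
have hSS : INR d.+2 = (INR d + 2)%R by rewrite !S_INR; lra.
rewrite hSS /log2.
set L := ln (INR #|T|) in lnn *.
have hd0 : (0 <= INR d)%R by apply: pos_INR.
case: (posnP d) => [d0|dpos].
  rewrite d0 /=.
  have : (0 <= L / ln 2)%R by apply: Rle_mult_inv_pos.
  lra.
have hlt : (Nf d < #|T|)%N.
  rewrite ltnNge; apply/negP => h.
  have : (d <= d.-1)%N by apply: dmin; rewrite prednK.
  by rewrite -{1}(prednK dpos) ltnn.
have hq : (0 < 1618/1000)%R by lra.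
have hLq : (INR d * ln (1618/1000) <= L)%R.
  rewrite -ln_pow //; apply: lnle; first by apply: pow_lt.
  apply: Rle_trans (Nf_ge d) _; apply: le_INR; apply/leP; exact: ltnW.
have qb := q_bound.
have A1 : (INR d * (59/85 * ln 2) <= INR d * ln (1618/1000))%R.
  by apply: Rmult_le_compat_l => //; lra.
have A2 : (INR d * (59/85) <= L / ln 2)%R.
  apply: (Rmult_le_reg_r (ln 2)) => //.
  have -> : (L / ln 2 * ln 2 = L)%R by field; lra.
  lra.
lra.
Qed.
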